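(* Let $p$ be a prime, let $A$ be a set with $|A|=p^2$, and let $f:A\to A$ be a bijection. Then there exists a binary operation $*$ on $A$ such that $(A,* )$ is a group isomorphic to $\mathbb{Z}_p\times\mathbb{Z}_p$ and $f$ is an automorphism of $(A,* )$ if and only if $f$ is the identity map or the multiset of cycle lengths of $f$ is one of the following: (a) $\frac{p^2-1}{d}$ cycles of length $d$ together with one cycle of length $1$, for some positive divisor $d$ of $p^2-1$; (b) $\frac{p-1}{d}$ cycles of length $pd$, $\frac{p-1}{d}$ cycles of length $d$, and one cycle of length $1$, for some positive divisor $d$ of $p-1$; (c) $\frac{(p-1)^2}{\mathrm{lcm}(d_1,d_2)}$ cycles of length $\mathrm{lcm}(d_1,d_2)$, $\frac{p-1}{d_1}$ cycles of length $d_1$, $\frac{p-1}{d_2}$ cycles of length $d_2$, and one cycle of length $1$, for some positive divisors $d_1,d_2$ of $p-1$ (where cycles listed with equal lengths are counted together).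
   Context: For a bijection $f$ of a finite set, a cycle is a sequence $a_1,\dots,a_m$ of distinct elements with $f(a_j)=a_{j+1}$ for $j<m$ and $f(a_m)=a_1$; its length is $m$; every element lies in exactly one cycle, and fixed points are cycles of length $1$. *)

(* Defs.v *)
From HB Require Import structures.
From mathcomp Require Import all_boot all_order all_algebra all_fingroup.
Set Implicit Arguments. Unset Strict Implicit. Unset Printing Implicit Defensive.

Definition is_group_op (A : Type) (op : A -> A -> A) : Prop :=
  associative op /\
  exists e : A, left_id e op /\ right_id e op /\
    forall x, exists y, op x y = e /\ op y x = e.

Definition iso_ZpxZp (p : nat) (A : Type) (op : A -> A -> A) : Prop :=
  exists phi : A -> ('Z_p * 'Z_p)%type,
    bijective phi /\ forall x y, phi (op x y) = (phi x + phi y)%R.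

(* f is an automorphism of (A, op) (f is already a bijection). *)
Definition is_auto (A : Type) (op : A -> A -> A) (f : A -> A) : Prop :=
  forall x y, f (op x y) = op (f x) (f y).

Definition cycle_type (A : finType) (f : {perm A}) : seq nat :=
  [seq #|C| | C : {set A} <- enum (porbits f)].

(* Main.v *)
Require Import Defs.
From mathcomp Require Import all_boot all_order all_algebra all_fingroup all_solvable all_field.
From mathcomp Require Import ring zify.
Set Implicit Arguments. Unset Strict Implicit. Unset Printing Implicit Defensive.
Import GRing.Theory.
Import FinRing.Theory.
Section Orb.
Variables (T : finType) (s : {perm T}).
Definition ob x := #|porbit s x|.

Lemma ob_gt0 x : 0 < ob x.
Proof. by rewrite lt0n card_porbit_neq0. Qed.

Lemma iter_mul_ob x q : iter (q * ob x) s x = x.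
Proof.
elim: q => [|q IH] //=; by rewrite mulSn iterD IH iter_porbit.
Qed.

Lemma iter_ob_dvd x k : (iter k s x == x) = (ob x %| k).
Proof.
rewrite {1}(divn_eq k (ob x)) addnC iterD iter_mul_ob /dvdn.
have [->|r0] := posnP (k %% ob x); first by rewrite eqxx.
apply/negbTE/eqP => h.
have U := uniq_traject_porbit s x.
have lt : k %% ob x < ob x by rewrite ltn_mod ob_gt0.
have E : nth x (traject s x (ob x)) (k %% ob x) = nth x (traject s x (ob x)) 0.
  by rewrite (nth_traject _ lt) (nth_traject _ (ob_gt0 x)) h.
move/eqP: E; rewrite nth_uniq ?size_traject ?ob_gt0 //.
by rewrite gtn_eqF.
Qed.

Lemma ob_char x m : 0 < m -> (forall k, iter k s x = x <-> m %| k) -> ob x = m.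
Proof.
move=> m0 H; apply/eqP; rewrite eqn_dvd -iter_ob_dvd.
apply/andP; split; first by apply/eqP/H.
by apply/H/eqP; rewrite iter_ob_dvd.
Qed.

Lemma ob_iter x k : ob (iter k s x) = ob x.
Proof. by rewrite /ob -permX porbit_perm. Qed.

Lemma iter_eq_mod x a c : (iter a s x == iter c s x) = (a == c %[mod ob x]).
Proof.
wlog le : a c / a <= c.
  move=> W; case: (leqP a c) => h; first by apply: W.
  by rewrite eq_sym (W c a (ltnW h)) eq_sym.
have -> : c = (c - a) + a by rewrite subnK.
rewrite iterD eq_sym -{2}(ob_iter x a) iter_ob_dvd ob_iter.
rewrite [in RHS]eq_sym eqn_mod_dvd ?leq_addl //.
by rewrite addnK.
Qed.

Definition Nc m := #|[set x | ob x == m]|.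
End Orb.
Section Rep.
Variables (T : finType) (s : {perm T}).
Local Notation ob := (ob s).

Definition rep x := odflt x [pick y in porbit s x].

Lemma rep_in x : rep x \in porbit s x.
Proof.
rewrite /rep; case: pickP => [y ->//|H].
by move: (H x); rewrite porbit_id.
Qed.

Lemma porbit_rep x : porbit s (rep x) = porbit s x.
Proof. by apply/eqP; rewrite eq_porbit_mem rep_in. Qed.

Lemma rep_eq x y : porbit s x = porbit s y -> rep x = rep y.
Proof.
move=> E; rewrite /rep E; case: pickP => [//|H].
by move: (H y); rewrite porbit_id.
Qed.

Lemma rep_rep x : rep (rep x) = rep x.
Proof. exact/rep_eq/porbit_rep. Qed.

Lemma ob_rep x : ob (rep x) = ob x.
Proof. by rewrite /ob porbit_rep. Qed.

Lemma rep_eqP x y : (rep x == rep y) = (y \in porbit s x).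
Proof.
apply/eqP/idP => [E|H].
  by rewrite -porbit_rep E porbit_rep porbit_id.
apply: rep_eq; apply/eqP; rewrite eq_sym eq_porbit_mem //.
Qed.

Lemma rep_iter x k : rep (iter k s x) = rep x.
Proof. by apply: rep_eq; rewrite -permX porbit_perm. Qed.

Definition idx x := index x (traject s (rep x) (ob x)).

Lemma mem_traj_rep x : x \in traject s (rep x) (ob x).
Proof. by rewrite -ob_rep -porbit_traject porbit_rep porbit_id. Qed.

Lemma idx_lt x : idx x < ob x.
Proof. by rewrite /idx -{2}(size_traject s (rep x) (ob x)) index_mem mem_traj_rep. Qed.

Lemma iter_idx x : iter (idx x) s (rep x) = x.
Proof. by rewrite -(nth_traject s (idx_lt x)) nth_index // mem_traj_rep. Qed.

Definition Rs m := [set r | (rep r == r) && (ob r == m)].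

Lemma count_enum_set (U : finType) (A : {set U}) (P : pred U) :
  count P (enum A) = #|[set x in A | P x]|.
Proof.
rewrite cardE -size_filter; apply: perm_size; apply: uniq_perm.
- by rewrite filter_uniq ?enum_uniq.
- exact: enum_uniq.
by move=> y; rewrite mem_filter !mem_enum !inE andbC.
Qed.

Lemma count_cycle_type m : count_mem m (cycle_type s) = #|Rs m|.
Proof.
rewrite /cycle_type count_map count_enum_set.
have -> : [set x in porbits s | preim (fun C : {set T} => #|C|) (pred1 m) x]
          = porbit s @: Rs m.
  apply/setP => C; rewrite !inE; apply/andP/imsetP.
    case=> /imsetP [x _ ->] /= /eqP Hm; exists (rep x).
      by rewrite inE rep_rep eqxx /= ob_rep /ob Hm.
    by rewrite porbit_rep.
  case=> r; rewrite inE => /andP [/eqP Hr /eqP Hm] ->; split.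
    exact: imset_f.
  by rewrite /= -Hm.
rewrite card_in_imset // => x y; rewrite !inE => /andP [/eqP Hx _] /andP [/eqP Hy _] E.
by rewrite -Hx -Hy; apply: rep_eq.
Qed.

Lemma Nc_Rs m : Nc s m = #|Rs m| * m.
Proof.
rewrite /Nc -sum1dep_card (partition_big rep (fun r => r \in Rs m)); last first.
  by move=> x Hx; rewrite inE rep_rep eqxx ob_rep.
rewrite -sum_nat_const; apply: eq_bigr => r; rewrite inE => /andP [/eqP Hr /eqP Hm].
rewrite sum1dep_card -Hm /ob; apply: eq_card => x; rewrite !inE.
apply/andP/idP => [[_ /eqP <-]|H].
  by rewrite porbit_rep porbit_id.
have E : porbit s x = porbit s r by apply/eqP; rewrite eq_porbit_mem.
by rewrite E eqxx; split => //; rewrite -Hr; apply/eqP/rep_eq.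
Qed.

Lemma count0_cycle_type : count_mem 0 (cycle_type s) = 0.
Proof.
rewrite count_cycle_type; apply: eq_card0 => x.
by rewrite !inE gtn_eqF ?andbF // ob_gt0.
Qed.

End Rep.
Lemma ct_perm_eq (T : finType) (s : {perm T}) (L : seq nat) :
  0 \notin L -> (forall m, 0 < m -> count_mem m L * m = Nc s m) ->
  perm_eq (cycle_type s) L.
Proof.
move=> L0 H; apply/allP => m _; rewrite /=; apply/eqP.
have [->|m0] := posnP m.
  by rewrite count0_cycle_type; apply/esym/count_memPn.
by apply/eqP; rewrite -(eqn_pmul2r m0) H // Nc_Rs count_cycle_type.
Qed.

Lemma perm_eq_ct (T : finType) (s : {perm T}) (L : seq nat) :
  perm_eq (cycle_type s) L -> forall m, count_mem m L * m = Nc s m.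
Proof.
by move=> /seq.permP H m; rewrite -H Nc_Rs count_cycle_type.
Qed.

Section Conj.
Variables (T U : finType) (s : {perm T}) (t : {perm U}).

Lemma ob_conj (psi : T -> U) : injective psi -> (forall x, psi (s x) = t (psi x)) ->
  forall x, ob t (psi x) = ob s x.
Proof.
move=> inj H x.
have It k : iter k t (psi x) = psi (iter k s x).
  by elim: k => //= k ->; rewrite H.
apply: ob_char; first exact: ob_gt0.
move=> k; rewrite It; split => [/inj E|E].
  by rewrite -iter_ob_dvd E.
by move: E; rewrite -iter_ob_dvd => /eqP ->.
Qed.

Lemma Nc_conj (psi : T -> U) : bijective psi -> (forall x, psi (s x) = t (psi x)) ->
  forall m, Nc s m = Nc t m.
Proof.
move=> bij H m; have inj := bij_inj bij; case: bij => phi K1 K2.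
rewrite /Nc -(card_imset _ inj); apply: eq_card => y; rewrite [in RHS]inE.
apply/imsetP/idP => [[x] | Hy].
  by rewrite inE => Hx ->; rewrite (ob_conj inj H).
by exists (phi y); rewrite ?K2 // inE -(ob_conj inj H) K2.
Qed.

Lemma conj_exists : #|T| = #|U| -> (forall m, Nc s m = Nc t m) ->
  exists psi : T -> U, bijective psi /\ forall x, psi (s x) = t (psi x).
Proof.
move=> cTU HN.
case: (pickP (@predT U)) => [u0 _ | H0]; last first.
  have F0 : T -> False.
    move=> x; have : 0 < #|U| by rewrite -cTU; apply/card_gt0P; exists x.
    by move/card_gt0P => [y _]; have := H0 y.
  have F1 : U -> False by move=> y; move: (H0 y).
  exists (fun x => match F0 x with end); split; last by move=> x; case: (F0 x).
  by exists (fun y => match F1 y with end) => [x|y]; [case: (F0 x)|case: (F1 y)].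
have HR m : #|Rs s m| = #|Rs t m|.
  have [->|m0] := posnP m.
    by rewrite !(@eq_card0 _ (Rs _ 0)) // => x; rewrite !inE gtn_eqF ?andbF // ob_gt0.
  by apply/eqP; rewrite -(eqn_pmul2r m0) -!Nc_Rs HN.
pose beta r := nth u0 (enum (Rs t (ob s r))) (index r (enum (Rs s (ob s r)))).
have B1 r : rep s r = r -> beta r \in Rs t (ob s r).
  move=> Hr; rewrite -mem_enum mem_nth // -cardE -HR cardE index_mem mem_enum.
  by rewrite inE Hr !eqxx.
have B1r r : rep s r = r -> rep t (beta r) = beta r.
  by move=> /B1; rewrite inE => /andP [/eqP -> _].
have B1o r : rep s r = r -> ob t (beta r) = ob s r.
  by move=> /B1; rewrite inE => /andP [_ /eqP ->].
have B2 r1 r2 : rep s r1 = r1 -> rep s r2 = r2 -> beta r1 = beta r2 -> r1 = r2.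
  move=> H1 H2 E.
  have Eo : ob s r1 = ob s r2 by rewrite -B1o // E B1o.
  move: E; rewrite /beta Eo => /eqP.
  have M r : rep s r = r -> r \in enum (Rs s (ob s r)).
    by move=> Hr; rewrite mem_enum inE Hr !eqxx.
  rewrite nth_uniq ?enum_uniq //; first last.
  - by rewrite -cardE -HR cardE index_mem M.
  - by rewrite -cardE -HR cardE index_mem -Eo M.
  move/eqP => Ei.
  by have := nth_index r1 (M _ H1); rewrite Eo Ei nth_index ?M // => ->.
pose psi x := iter (idx s x) t (beta (rep s x)).
have Rr x : rep s (rep s x) = rep s x by rewrite rep_rep.
have Pr x : rep t (psi x) = beta (rep s x) by rewrite /psi rep_iter B1r.
have Po x : ob t (beta (rep s x)) = ob s x by rewrite B1o // ob_rep.
have inj : injective psi.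
  move=> x y E.
  have Er : rep s x = rep s y by apply: B2; rewrite // -!Pr E.
  move: E; rewrite /psi Er => /eqP; rewrite iter_eq_mod Po.
  have Eo : ob s x = ob s y by rewrite -ob_rep Er ob_rep.
  rewrite !modn_small ?idx_lt // -?Eo ?idx_lt // => /eqP Ei.
  by rewrite -(iter_idx s x) -(iter_idx s y) Ei Er.
exists psi; split.
  by apply: inj_card_bij inj _; rewrite cTU.
move=> x; rewrite /psi.
have Rs1 : rep s (s x) = rep s x by rewrite -(rep_iter s x 1).
rewrite Rs1 -iterS; apply/eqP; rewrite iter_eq_mod Po -(ob_rep s x) -iter_eq_mod.
by rewrite iterS !iter_idx -Rs1 iter_idx.
Qed.
End Conj.
Section Transfer.
Variables (p : nat) (A U : finType) (f : {perm A}) (addU : U -> U -> U).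
Local Notation V := ('Z_p * 'Z_p)%type.
Variable E : V -> U.
Hypothesis Ebij : bijective E.
Hypothesis Eadd : forall a b, E (a + b)%R = addU (E a) (E b).

Lemma transfer_fwd :
  (exists op : A -> A -> A, is_group_op op /\ iso_ZpxZp p op /\ is_auto op f) ->
  exists g : {perm U}, (forall a b, g (addU a b) = addU (g a) (g b)) /\
     forall m, Nc f m = Nc g m.
Proof.
case=> op [_ [[phi [phib phiH]] fa]].
pose psi x := E (phi x).
have psib : bijective psi by apply: bij_comp.
have [psiinv pK1 pK2] := psib.
have psiH x y : psi (op x y) = addU (psi x) (psi y) by rewrite /psi phiH Eadd.
pose g0 u := psi (f (psiinv u)).
have g0inj : injective g0.
  move=> u v /(bij_inj psib) /perm_inj /(can_inj pK2) //.
exists (perm g0inj); split.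
  move=> a b; rewrite !permE /g0.
  have -> : psiinv (addU a b) = op (psiinv a) (psiinv b).
    by apply: (bij_inj psib); rewrite psiH !pK2.
  by rewrite fa psiH.
apply: (Nc_conj psib) => x; by rewrite permE /g0 pK1.
Qed.

Lemma transfer_bwd (g : {perm U}) :
  (forall a b, g (addU a b) = addU (g a) (g b)) -> #|A| = #|U| ->
  (forall m, Nc f m = Nc g m) ->
  exists op : A -> A -> A, is_group_op op /\ iso_ZpxZp p op /\ is_auto op f.
Proof.
move=> gadd cAU HN.
have [psi [psib psiH]] := conj_exists cAU HN.
have [Einv EK1 EK2] := Ebij.
have Einvadd a b : Einv (addU a b) = (Einv a + Einv b)%R.
  by apply: (bij_inj Ebij); rewrite EK2 Eadd !EK2.
pose phi x := Einv (psi x).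
have phib : bijective phi.
  apply: bij_comp => //; by exists E.
have [phiinv fK1 fK2] := phib.
pose op x y := phiinv (phi x + phi y)%R.
have phiop x y : phi (op x y) = (phi x + phi y)%R by rewrite /op fK2.
have phiinj := bij_inj phib.
exists op; split; last split.
- split.
    by move=> x y z; apply: phiinj; rewrite !phiop addrA.
  exists (phiinv 0%R); split; last split.
  + by move=> x; apply: phiinj; rewrite phiop fK2 add0r.
  + by move=> x; apply: phiinj; rewrite phiop fK2 addr0.
  move=> x; exists (phiinv (- phi x)%R); split; apply: phiinj;
    by rewrite phiop fK2 ?subrr ?addNr.
- by exists phi; split.
move=> x y; apply: phiinj.
have phif z : phi (f z) = Einv (g (E (phi z))).
  by rewrite /phi psiH EK2.
by rewrite phif !phiop Eadd gadd Einvadd !phif.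
Qed.
End Transfer.
Section Lin.
Variables (F : finFieldType) (p : nat).
Local Open Scope ring_scope.
Hypothesis pr : prime p.
Hypothesis cF : #|F| = p.
Hypothesis chF : (p \in [pchar F])%R.
Hypothesis natF : forall x : F, exists n : nat, x = n%:R.
Local Notation W := (F * F)%type.

Lemma natF0 k : (k%:R == 0 :> F) = (p %| k)%N.
Proof. by rewrite (dvdn_pcharf chF). Qed.

Definition det (v w : W) := v.1 * w.2 - v.2 * w.1.
Definition comb x (v : W) y (w : W) : W := (x * v.1 + y * w.1, x * v.2 + y * w.2).
Definition sc l (v : W) : W := (l * v.1, l * v.2).
Definition additive2 (g : W -> W) := forall u v, g (u + v) = g u + g v.

Lemma addpair (a b c d : F) : ((a, b) : W) + (c, d) = (a + c, b + d).
Proof. reflexivity. Qed.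

Lemma pair_mulrn (v : W) n : v *+ n = (v.1 *+ n, v.2 *+ n).
Proof. elim: n => [|n IH]; first by case: v. by rewrite !mulrS IH. Qed.

Lemma add_mulrn g v n : additive2 g -> g (v *+ n) = g v *+ n.
Proof.
move=> ga; elim: n => [|n IH].
  by rewrite !mulr0n; apply: (addrI (g 0)); rewrite -ga !addr0.
by rewrite !mulrS ga IH.
Qed.

Lemma comb_mulrn (n m : nat) v w : comb n%:R v m%:R w = v *+ n + w *+ m.
Proof.
rewrite !pair_mulrn addpair /comb.
rewrite -[v.1 *+ _]mulr_natl -[v.2 *+ _]mulr_natl -[w.1 *+ _]mulr_natl -[w.2 *+ _]mulr_natl.
reflexivity.
Qed.

Lemma lin g x v y w : additive2 g -> g (comb x v y w) = comb x (g v) y (g w).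
Proof.
move=> ga; have [n ->] := natF x; have [m ->] := natF y.
by rewrite !comb_mulrn ga !(add_mulrn _ _ ga).
Qed.

Lemma basis v w u : det v w != 0 ->
  u = comb ((u.1 * w.2 - u.2 * w.1) / det v w) v ((v.1 * u.2 - v.2 * u.1) / det v w) w.
Proof.
move=> d0; case: u => u1 u2; case: v d0 => v1 v2; case: w => w1 w2.
rewrite /comb /det /= => d0.
congr pair; field; exact: d0.
Qed.

Lemma collinear v w : v != 0 -> det v w = 0 -> exists l, w = sc l v.
Proof.
case: v => v1 v2; case: w => w1 w2; rewrite /det /sc /= => v0 /eqP.
rewrite subr_eq0 => /eqP D.
have [e1|n1] := eqVneq v1 0.
  have n2 : v2 != 0 by apply: contraNneq v0 => e2; rewrite e1 e2.
  exists (w2 / v2); congr pair.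
    move: D; rewrite e1 mul0r => /esym/eqP; rewrite mulf_eq0 (negbTE n2) /= => /eqP ->.
    by rewrite mulr0.
  by field.
exists (w1 / v1); congr pair; first by field.
apply: (mulfI n1); rewrite D; field; exact: n1.
Qed.

Definition ordF (l : F) : nat := #[(insubd (1%g : {unit F}) l)]%g.

Lemma ordFP l k : l != 0 -> (l ^+ k == 1) = (ordF l %| k)%N.
Proof.
move=> l0; rewrite /ordF order_dvdn -val_eqE val_unitX /= insubdK //.
by rewrite unitfE.
Qed.

Lemma ordF_gt0 l : (0 < ordF l)%N.
Proof. exact: order_gt0. Qed.

Lemma ordF_dvd l : (ordF l %| p.-1)%N.
Proof.
by rewrite /ordF -cF -card_finField_unit order_dvdG // inE.
Qed.

Lemma coprime_ordF l : coprime (ordF l) p.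
Proof.
rewrite coprime_sym prime_coprime //; apply/negP => H.
have := dvdn_leq (ordF_gt0 l) H; have := dvdn_leq _ (ordF_dvd l).
have p0 := prime_gt1 pr; rewrite -subn1 subn_gt0 => /(_ p0) h1 h2.
by lia.
Qed.

Lemma fixmul (a x : F) : (a * x == x) = (x == 0) || (a == 1).
Proof.
have [->|x0] := eqVneq x 0; first by rewrite mulr0 eqxx.
by rewrite /= -{2}[x]mul1r (inj_eq (mulIf x0)).
Qed.

Definition ee (l x : F) : nat := if x == 0 then 1%N else ordF l.

Lemma ee_gt0 l x : (0 < ee l x)%N.
Proof. by rewrite /ee; case: ifP => // _; exact: ordF_gt0. Qed.

Lemma ee_dvd l x k : l != 0 -> (l ^+ k * x == x) = (ee l x %| k)%N.
Proof. by move=> l0; rewrite fixmul /ee; case: (x =P 0) => _; rewrite ?dvd1n ?ordFP. Qed.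

Lemma iter_perm (T : finType) (h : T -> T) (hi : injective h) k x :
  iter k (perm hi) x = iter k h x.
Proof. by elim: k => //= k ->; rewrite permE. Qed.

Lemma Nc_sum (T : finType) (s : {perm T}) m : Nc s m = \sum_(x : T) (ob s x == m : nat).
Proof.
rewrite /Nc -sum1dep_card big_mkcond; apply: eq_bigr => x _; by case: (_ == _).
Qed.

Lemma sum_pair (G : F -> F -> nat) :
  \sum_(v : W) G v.1 v.2 = \sum_(x : F) \sum_(y : F) G x y.
Proof. by rewrite pair_big. Qed.

Lemma sumF0 (G : bool -> nat) : \sum_(y : F) G (y == 0) = (G true + p.-1 * G false)%N.
Proof.
rewrite (bigD1 0) //= eqxx; congr (_ + _)%N.
rewrite (eq_bigr (fun _ => G false)); last by move=> y /negbTE ->.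
rewrite sum_nat_cond_const; congr (_ * _)%N.
rewrite -cF -(cardsC1 (0 : F)); apply: eq_card => y; by rewrite !inE.
Qed.

Lemma cnt (x n m : nat) : ((x == m) * n * m = (x == m) * (n * x))%N.
Proof. by case: eqP => [->|_]; rewrite ?mul0n ?mul1n. Qed.

Definition hd (l m : F) (v : W) : W := (l * v.1, m * v.2).

Lemma hd_inj l m : l != 0 -> m != 0 -> injective (hd l m).
Proof.
move=> l0 m0 [x y] [x' y'] [E1 E2]; congr pair; [exact: (mulfI l0) | exact: (mulfI m0)].
Qed.

Lemma iter_hd l m k v : iter k (hd l m) v = (l ^+ k * v.1, m ^+ k * v.2).
Proof.
elim: k => [|k IH]; first by case: v => x y /=; rewrite !mul1r.
by rewrite iterS IH /hd /= !exprS !mulrA.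
Qed.

Lemma ob_hd l m (l0 : l != 0) (m0 : m != 0) v :
  ob (perm (hd_inj l0 m0)) v = lcmn (ee l v.1) (ee m v.2).
Proof.
apply: ob_char; first by rewrite lcmn_gt0 !ee_gt0.
move=> k; rewrite iter_perm iter_hd dvdn_lcm -!ee_dvd //; case: v => x y /=.
split; first by case=> -> ->; rewrite !eqxx.
by case/andP => /eqP -> /eqP ->.
Qed.

Lemma p_gt1 : (1 < p)%N. Proof. exact: prime_gt1. Qed.

Definition Lc (d1 d2 : nat) : seq nat :=
  nseq ((p.-1) ^ 2 %/ lcmn d1 d2) (lcmn d1 d2)
  ++ nseq (p.-1 %/ d1) d1 ++ nseq (p.-1 %/ d2) d2 ++ [:: 1%N].

Lemma ct_hd l m (l0 : l != 0) (m0 : m != 0) :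
  perm_eq (cycle_type (perm (hd_inj l0 m0))) (Lc (ordF l) (ordF m)).
Proof.
set d1 := ordF l; set d2 := ordF m; set L := lcmn d1 d2.
have d10 : (0 < d1)%N := ordF_gt0 l.
have d20 : (0 < d2)%N := ordF_gt0 m.
apply: ct_perm_eq.
  rewrite /Lc !mem_cat !mem_nseq /= !negb_or; apply/and4P; split.
  - by rewrite negb_and eq_sym -lt0n lcmn_gt0 d10 d20 orbT.
  - by rewrite negb_and eq_sym -lt0n d10 orbT.
  - by rewrite negb_and eq_sym -lt0n d20 orbT.
  - by [].
move=> n n0; rewrite Nc_sum.
rewrite (eq_bigr (fun v => (lcmn (ee l v.1) (ee m v.2) == n : nat))); last first.
  by move=> v _; rewrite ob_hd.
rewrite (sum_pair (fun x y => (lcmn (ee l x) (ee m y) == n : nat))).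
rewrite (eq_bigr (fun x => (lcmn (ee l x) 1 == n) + p.-1 * (lcmn (ee l x) d2 == n)))%N;
  last first.
  move=> x _; rewrite (sumF0 (fun b => (lcmn (ee l x) (if b then 1 else d2) == n : nat))).
  by [].
rewrite (sumF0 (fun b => (lcmn (if b then 1 else d1) 1 == n) + p.-1 * (lcmn (if b then 1 else d1) d2 == n)))%N.
rewrite !lcmn1 !lcm1n /Lc !count_cat !count_nseq /= addn0 !mulnDl !cnt.
have LD : (L %| p.-1 ^ 2)%N.
  by rewrite /L expnS expn1 dvdn_mull // dvdn_lcm !ordF_dvd.
rewrite !divnK ?ordF_dvd //.
rewrite /pred1 /=.
set a := (L == n : nat); set b := (d1 == n : nat); set c := (d2 == n : nat); set e := (1 == n : nat).
lia.
Qed.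

Definition hj (l : F) (v : W) : W := (l * (v.1 + v.2), l * v.2).

Lemma hj_inj l : l != 0 -> injective (hj l).
Proof.
move=> l0 [x y] [x' y'] [E1 E2].
have Ey : y = y' := mulfI l0 E2.
have Ex : x = x'.
  by apply: (addIr y); rewrite {2}Ey; exact: (mulfI l0 E1).
by rewrite Ex Ey.
Qed.

Lemma iter_hj l k v : iter k (hj l) v = (l ^+ k * (v.1 + k%:R * v.2), l ^+ k * v.2).
Proof.
elim: k => [|k IH]; first by case: v => x y /=; rewrite !mul1r mul0r addr0.
rewrite iterS IH /hj /= -natr1 !exprS; congr pair; ring.
Qed.

Lemma ob_hj l (l0 : l != 0) v :
  ob (perm (hj_inj l0)) v = if v.2 == 0 then ee l v.1 else (ordF l * p)%N.
Proof.
case: v => x y /=; apply: ob_char.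
  by case: ifP => _; rewrite ?ee_gt0 // muln_gt0 ordF_gt0 prime_gt0.
move=> k; rewrite iter_perm iter_hj /=.
have [->|y0] := eqVneq y 0.
  rewrite mulr0 addr0 -ee_dvd //; split; first by case=> ->.
  by move/eqP ->; rewrite mulr0.
rewrite Gauss_dvd ?coprime_ordF // -ordFP //.
split.
  case=> E1 E2.
  have lk : l ^+ k = 1.
    by have := fixmul (l ^+ k) y; rewrite (negbTE y0) E2 eqxx /= => /esym/eqP.
  move: E1; rewrite lk mul1r => /eqP; rewrite -subr_eq0 addrC addKr mulf_eq0 (negbTE y0) orbF.
  by rewrite natF0 eqxx.
case/andP => /eqP lk; rewrite -natF0 => /eqP k0.
by rewrite lk k0 !mul1r mul0r addr0.
Qed.

Definition Lb (d : nat) : seq nat :=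
  nseq (p.-1 %/ d) (p * d)%N ++ nseq (p.-1 %/ d) d ++ [:: 1%N].

Lemma ct_hj l (l0 : l != 0) :
  perm_eq (cycle_type (perm (hj_inj l0))) (Lb (ordF l)).
Proof.
set d := ordF l.
have d0 : (0 < d)%N := ordF_gt0 l.
have p0 : (0 < p)%N := prime_gt0 pr.
apply: ct_perm_eq.
  rewrite /Lb !mem_cat !mem_nseq /= !negb_or; apply/and3P; split.
  - by rewrite negb_and eq_sym -lt0n muln_gt0 d0 p0 orbT.
  - by rewrite negb_and eq_sym -lt0n d0 orbT.
  - by [].
move=> n n0; rewrite Nc_sum.
pose Q (b1 b2 : bool) := ((if b2 then (if b1 then 1 else d) else d * p)%N == n : nat).
rewrite (eq_bigr (fun v => Q (v.1 == 0) (v.2 == 0))); last first.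
  by move=> v _; rewrite ob_hj /Q /ee; case: (v.2 == 0).
rewrite (sum_pair (fun x y => Q (x == 0) (y == 0))).
rewrite (eq_bigr (fun x : F => Q (x == 0%R) true + p.-1 * Q (x == 0%R) false)%N); last first.
  by move=> x _; rewrite (sumF0 (fun b => Q (x == 0) b)).
rewrite (sumF0 (fun b => Q b true + p.-1 * Q b false))%N /Q /=.
rewrite /Lb !count_cat !count_nseq /= addn0 !mulnDl !cnt.
have -> : ((1 == n) * n = (1 == n))%N by case: eqP => [<-|].
rewrite /pred1 /=.
have H1 : (p.-1 %/ d * d = p.-1)%N by rewrite divnK ?ordF_dvd.
move: H1; set r := (p.-1 %/ d)%N.
set a := (p * d == n : nat); set b := (d == n : nat); set e := (1 == n : nat).
rewrite (mulnC d p) -/a.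
have Hp : p = (p.-1).+1 by rewrite prednK.
move: Hp; set q := p.-1.
nia.
Qed.

Lemma ct_Nc (T U : finType) (s : {perm T}) (t : {perm U}) (L : seq nat) :
  (forall m, Nc s m = Nc t m) -> perm_eq (cycle_type t) L -> perm_eq (cycle_type s) L.
Proof.
move=> HN H; apply: ct_perm_eq.
  apply/count_memPn; move/seq.permP: H => <-; exact: count0_cycle_type.
by move=> m _; rewrite HN (perm_eq_ct H).
Qed.

Lemma g0 g : additive2 g -> g 0 = 0.
Proof. by move=> ga; have := add_mulrn 0 0 ga; rewrite !mulr0n. Qed.

Lemma sc_comb l v : sc l v = comb l v 0 v.
Proof. by rewrite /comb /sc !mul0r !addr0. Qed.

Lemma gsc g l v : additive2 g -> g (sc l v) = sc l (g v).
Proof. by move=> ga; rewrite !sc_comb lin. Qed.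

Lemma comb_inj v w x y x' y' : det v w != 0 ->
  comb x v y w = comb x' v y' w -> x = x' /\ y = y'.
Proof.
move=> d0 E.
have C1 a b : (comb a v b w).1 * w.2 - (comb a v b w).2 * w.1 = a * det v w.
  by rewrite /comb /det /=; ring.
have C2 a b : v.1 * (comb a v b w).2 - v.2 * (comb a v b w).1 = b * det v w.
  by rewrite /comb /det /=; ring.
split; apply: (mulIf d0).
  by rewrite -(C1 x y) -(C1 x' y') E.
by rewrite -(C2 x y) -(C2 x' y') E.
Qed.

Lemma inj_nz g v : additive2 g -> injective g -> v != 0 -> g v != 0.
Proof. by move=> ga gi; apply: contraNneq => E; apply/eqP/gi; rewrite E g0. Qed.

Lemma eig_nz g v l : additive2 g -> injective g -> v != 0 -> g v = sc l v -> l != 0.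
Proof.
move=> ga gi v0 E; apply: contraNneq (inj_nz ga gi v0) => l0.
by rewrite E l0 /sc !mul0r.
Qed.

Lemma case_diag (g : {perm W}) v w l m : additive2 g -> det v w != 0 ->
  g v = sc l v -> g w = sc m w -> forall (l0 : l != 0) (m0 : m != 0),
  perm_eq (cycle_type g) (Lc (ordF l) (ordF m)).
Proof.
move=> ga d0 Ev Ew l0 m0.
pose P (z : W) := comb z.1 v z.2 w.
have Pi : injective P.
  by move=> [x y] [x' y'] /(comb_inj d0) /= [-> ->].
apply: (ct_Nc _ (ct_hd l0 m0)) => n; apply/esym.
apply: (Nc_conj (injF_bij Pi)) => z.
rewrite permE /P lin // Ev Ew /hd /comb /sc /=; congr pair; ring.
Qed.

Lemma case_jordan (g : {perm W}) v w l a : additive2 g -> det v w != 0 ->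
  g v = sc l v -> g w = comb a v l w -> a != 0 -> forall (l0 : l != 0),
  perm_eq (cycle_type g) (Lb (ordF l)).
Proof.
move=> ga d0 Ev Ew a0 l0.
pose P (z : W) := comb (z.1 * (a / l)) v z.2 w.
have al0 : a / l != 0 by rewrite mulf_neq0 ?invr_eq0.
have Pi : injective P.
  move=> [x y] [x' y'] /(comb_inj d0) /= [E ->].
  by rewrite (mulIf al0 E).
apply: (ct_Nc _ (ct_hj l0)) => n; apply/esym.
apply: (Nc_conj (injF_bij Pi)) => z.
rewrite permE /P lin // Ev Ew /hj /comb /sc /=; congr pair; field; exact: l0.
Qed.

Lemma p2E : (p ^ 2 - 1 = p.-1 * p.-1 + 2 * p.-1)%N.
Proof.
have Hp : p = (p.-1).+1 by rewrite prednK // prime_gt0.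
move: Hp; set q := p.-1 => Hp; rewrite Hp; nia.
Qed.

Definition La (d : nat) : seq nat := nseq ((p ^ 2 - 1) %/ d) d ++ [:: 1%N].

Lemma iter_add g k : additive2 g -> additive2 (iter k g).
Proof. by move=> ga; elim: k => [|k IH] u v //=; rewrite IH ga. Qed.

Lemma fixall (g : {perm W}) : additive2 g ->
  (forall v, v != 0 -> forall l, g v != sc l v) ->
  forall u k, u != 0 -> iter k g u = u -> forall w, iter k g w = w.
Proof.
move=> ga noeig u k u0 Hu w.
have d0 : det u (g u) != 0.
  apply/negP => /eqP D; have [l E] := collinear u0 D.
  by have := noeig u u0 l; rewrite E eqxx.
have Gg : iter k g (g u) = g u by rewrite -iterSr iterS Hu.
rewrite (basis w d0).
by rewrite (lin _ _ _ _ (iter_add k ga)) Hu Gg.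
Qed.

Lemma case_irr (g : {perm W}) : additive2 g ->
  (forall v, v != 0 -> forall l, g v != sc l v) ->
  exists d, [/\ (0 < d)%N, (d %| p ^ 2 - 1)%N & perm_eq (cycle_type g) (La d)].
Proof.
move=> ga noeig.
set v0 : W := (1, 0).
have v00 : v0 != 0 by apply/negP => /eqP [] /eqP; rewrite oner_eq0.
set d := ob g v0.
have d0 : (0 < d)%N := ob_gt0 g v0.
have obf w : ob g w = if w == 0 then 1%N else d.
  have [->|w0] := eqVneq w 0.
    apply: ob_char => // k; split=> // _.
    by elim: k => //= k ->; rewrite g0.
  apply: ob_char => // k; split => H.
    by rewrite -iter_ob_dvd; apply/eqP; apply: (fixall ga noeig w0 H).
  by apply: (fixall ga noeig v00); apply/eqP; rewrite iter_ob_dvd.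
pose Q (b1 b2 : bool) (n : nat) := ((if b1 && b2 then 1%N else d) == n : nat).
have NcE n : Nc g n = (Q true true n + p.-1 * Q true false n +
                       p.-1 * (Q false true n + p.-1 * Q false false n))%N.
  rewrite Nc_sum (eq_bigr (fun v => Q (v.1 == 0) (v.2 == 0) n)); last first.
    by move=> [x y] _; rewrite obf /Q xpair_eqE.
  rewrite (sum_pair (fun x y => Q (x == 0) (y == 0) n)).
  rewrite (eq_bigr (fun x : F => Q (x == 0%R) true n + p.-1 * Q (x == 0%R) false n)%N); last first.
    by move=> x _; rewrite (sumF0 (fun b => Q (x == 0) b n)).
  by rewrite (sumF0 (fun b => Q b true n + p.-1 * Q b false n))%N.
have dd : (d %| p ^ 2 - 1)%N.
  have [->|d1] := eqVneq d 1%N; first exact: dvd1n.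
  have := Nc_Rs g d; rewrite NcE /Q /= eqxx eq_sym (negbTE d1) p2E.
  move=> E; apply/dvdnP; exists #|Rs g d|; rewrite -E /=; nia.
exists d; split => //.
apply: ct_perm_eq.
  rewrite /La mem_cat mem_nseq /= negb_or negb_and eq_sym -lt0n d0 orbT; by [].
move=> n n0; rewrite NcE /La count_cat count_nseq /= addn0 mulnDl cnt divnK //.
have -> : ((1 == n) * n = (1 == n))%N by case: eqP => [<-|].
rewrite /Q /= /pred1 /= p2E.
set a := (d == n : nat); set e := (1 == n : nat).
nia.
Qed.

Lemma classify (g : {perm W}) : additive2 g ->
  (exists d, [/\ (0 < d)%N, (d %| p ^ 2 - 1)%N & perm_eq (cycle_type g) (La d)]) \/
  (exists d, [/\ (0 < d)%N, (d %| p.-1)%N & perm_eq (cycle_type g) (Lb d)]) \/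
  (exists d1 d2, [/\ (0 < d1)%N, (0 < d2)%N, (d1 %| p.-1)%N, (d2 %| p.-1)%N &
                     perm_eq (cycle_type g) (Lc d1 d2)]).
Proof.
move=> ga; have gi := @perm_inj _ g.
case: (boolP [exists v : W, (v != 0) && [exists l : F, g v == sc l v]]); last first.
  move=> /existsPn H; left; apply: case_irr => // v v0 l; apply/negP => /eqP E.
  by move: (H v); rewrite v0 /=; move/existsPn/(_ l); rewrite E eqxx.
case/existsP => v /andP [v0 /existsP [l /eqP Ev]].
have l0 := eig_nz ga gi v0 Ev.
case: (boolP [exists w : W, (det v w != 0) && [exists m : F, g w == sc m w]]).
  case/existsP => w /andP [d0 /existsP [m /eqP Ew]].
  have w0 : w != 0 by apply: contraNneq d0 => ->; rewrite /det !mulr0 subrr.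
  have m0 := eig_nz ga gi w0 Ew.
  right; right; exists (ordF l), (ordF m); split; rewrite ?ordF_gt0 ?ordF_dvd //.
  exact: case_diag ga d0 Ev Ew l0 m0.
move/existsPn => noeig2.
have noeig w m : det v w != 0 -> g w != sc m w.
  move=> dw; apply/negP => /eqP E; move: (noeig2 w); rewrite dw /=.
  by move/existsPn/(_ m); rewrite E eqxx.
have vE : v = (v.1, v.2) by case: (v).
set w : W := if v.1 == 0 then (1, 0) else (0, 1).
have d0 : det v w != 0.
  rewrite /w /det; case: (v.1 =P 0) => [e1|/eqP n1] /=.
    rewrite !mulr0 mulr1 sub0r oppr_eq0; apply: contraNneq v0 => e2.
    by rewrite vE e1 e2.
  by rewrite mulr1 mulr0 subr0.
set a := ((g w).1 * w.2 - (g w).2 * w.1) / det v w.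
set b := (v.1 * (g w).2 - v.2 * (g w).1) / det v w.
have Ew : g w = comb a v b w by exact: basis.
have bl : b = l.
  apply/eqP; apply/negP => /negP bl.
  have bl0 : b - l != 0 by rewrite subr_eq0.
  pose t := a / (b - l).
  pose w' := comb t v 1 w.
  have dw' : det v w' != 0.
    by have -> : det v w' = det v w by rewrite /w' /det /comb /=; ring.
  apply: (negP (noeig w' b dw')); apply/eqP.
  rewrite lin // Ev Ew /w' /t /sc /comb /=; congr pair; field; exact: bl0.
have a0 : a != 0.
  apply/negP => /eqP a0; apply: (negP (noeig w l d0)); apply/eqP.
  by rewrite Ew a0 -bl /comb /sc /= !mul0r !add0r.
right; left; exists (ordF l); split; rewrite ?ordF_gt0 ?ordF_dvd //.
rewrite bl in Ew.
exact: case_jordan ga d0 Ev Ew a0 l0.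
Qed.

Lemma hd_add l m : additive2 (hd l m).
Proof. by move=> [u1 u2] [v1 v2]; rewrite /hd !addpair /=; congr pair; ring. Qed.

Lemma hj_add l : additive2 (hj l).
Proof. by move=> [u1 u2] [v1 v2]; rewrite /hj !addpair /=; congr pair; ring. Qed.
End Lin.
Section Models.
Variable p : nat.
Hypothesis pr : prime p.
Local Open Scope ring_scope.
Local Notation V := ('Z_p * 'Z_p)%type.

Lemma natr_mod (R : nzRingType) (chR : p \in [pchar R]) n : ((n %% p)%N%:R = n%:R :> R).
Proof.
by rewrite {2}(divn_eq n p) natrD natrM (pcharf0 chR) mulr0 add0r.
Qed.

Lemma Zp_lt (x : 'Z_p) : (x < p)%N.
Proof. by apply: (leq_trans (ltn_ord x)); rewrite Zp_cast // prime_gt1. Qed.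

Lemma Zp_val_add (x y : 'Z_p) : ((x + y)%R : nat) = ((x + y) %% p)%N.
Proof. exact: (congr1 (fun m => ((x : nat) + y) %% m)%N (Zp_cast (prime_gt1 pr))). Qed.

Lemma Zp_natr_add (R : nzRingType) (chR : p \in [pchar R]) (x y : 'Z_p) :
  (((x + y)%R : nat)%:R = (x : nat)%:R + (y : nat)%:R :> R).
Proof. by rewrite Zp_val_add natr_mod // natrD. Qed.

Lemma cardV : #|{: V}| = (p ^ 2)%N.
Proof. by rewrite card_prod card_ord Zp_cast ?prime_gt1 // expnS expn1. Qed.

Lemma additive_inj (U : zmodType) (E : V -> U) :
  (forall a b, E (a + b) = E a + E b) -> (forall z, E z = 0 -> z = 0) -> injective E.
Proof.
move=> Ea Ek x y Exy; apply/eqP; rewrite -subr_eq0; apply/eqP/Ek.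
have : E (x - y + y) = E x by rewrite subrK.
by rewrite Ea Exy => /eqP; rewrite -subr_eq0 addrK => /eqP.
Qed.

Definition EW (z : V) : ('F_p * 'F_p)%type := ((z.1 : nat)%:R, (z.2 : nat)%:R).

Lemma EW_add a b : EW (a + b) = EW a + EW b.
Proof.
by rewrite /EW /= !(Zp_natr_add (pchar_Fp pr)).
Qed.

Lemma EW_bij : bijective EW.
Proof.
have inj : injective EW.
  move=> [x1 x2] [y1 y2] [E1 E2].
  have I (x y : 'Z_p) : ((x : nat)%:R = (y : nat)%:R :> 'F_p) -> x = y.
    move=> /(congr1 val); rewrite /= !val_Fp_nat // !modn_small ?Zp_lt // => e.
    exact: val_inj.
  by rewrite (I _ _ E1) (I _ _ E2).
apply: inj_card_bij inj _; by rewrite cardV card_prod card_Fp // expnS expn1.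
Qed.
End Models.
Section KModel.
Variable p : nat.
Hypothesis pr : prime p.
Variable K : finFieldType.
Local Open Scope ring_scope.
Hypothesis chK : p \in [pchar K].
Hypothesis cK : #|K| = (p ^ 2)%N.
Local Notation V := ('Z_p * 'Z_p)%type.

Lemma exists_theta : exists th : K, th \notin [set ((i : nat)%:R : K) | i : 'I_p].
Proof.
case: (pickP [pred th : K | th \notin [set ((i : nat)%:R : K) | i : 'I_p]]) => [th H|H].
  by exists th.
have : (#|K| <= #|[set ((i : nat)%:R : K) | i : 'I_p]|)%N.
  apply: subset_leq_card; apply/subsetP => x _; move: (H x) => /= /negbFE //.
move/leq_trans/(_ (leq_imset_card _ _)); rewrite card_ord cK.
have := prime_gt1 pr; rewrite expnS expn1 => p1 h.
by have := leq_pmul2r (ltnW p1) : _; nia.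
Qed.

Variable th : K.
Hypothesis Hth : th \notin [set ((i : nat)%:R : K) | i : 'I_p].

Definition EK (z : V) : K := (z.1 : nat)%:R + (z.2 : nat)%:R * th.

Lemma EK_add a b : EK (a + b) = EK a + EK b.
Proof. rewrite /EK /= !(Zp_natr_add pr chK) mulrDl; ring. Qed.

Lemma natK0 n : ((n%:R : K) == 0) = (p %| n)%N.
Proof. by rewrite (dvdn_pcharf chK). Qed.

Lemma EK_ker z : EK z = 0 -> z = 0.
Proof.
case: z => a b; rewrite /EK /= => E.
have a_lt := Zp_lt pr a; have b_lt := Zp_lt pr b.
have small (x : 'Z_p) : (p %| x)%N -> x = 0.
  move=> H; apply: val_inj => /=; move: H; rewrite /dvdn modn_small ?Zp_lt //.
  by move/eqP.
have [b0|bn0] := posnP (b : nat).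
  have b00 : b = 0 by apply: val_inj.
  move: E; rewrite b0 mul0r addr0 => /eqP; rewrite natK0 => /small ->.
  by rewrite b00.
exfalso; move/negP: Hth; apply.
set B : K := (b : nat)%:R; set A : K := (a : nat)%:R.
have B0 : B != 0.
  rewrite /B natK0; apply/negP => /(dvdn_leq bn0); rewrite leqNgt b_lt //.
have Bp : B ^+ p = B.
  by have := pFrobenius_aut_nat chK b; rewrite pFrobenius_autE.
have p2 : p = (p.-2).+2 by rewrite -subn2 -addn2 subnK // prime_gt1.
have Bp1 : B ^+ (p.-2).+1 = 1.
  apply: (mulIf B0); by rewrite mul1r -exprSr -p2.
have Eth : th = - (A * B ^+ p.-2).
  have : B * th = - A by apply/eqP; rewrite -addr_eq0 addrC; apply/eqP; exact: E.
  by move=> BE; rewrite -[th]mulr1 -Bp1 exprS mulrA [th * B]mulrC BE mulNr.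
set n := ((p.-1) * ((a : nat) * (b : nat) ^ p.-2))%N.
have En : th = n%:R.
  rewrite Eth /n /A /B -natrX -natrM.
  apply/eqP; rewrite eq_sym -addr_eq0 -natrD.
  set X := ((a : nat) * (b : nat) ^ p.-2)%N.
  have -> : (p.-1 * X + X = p * X)%N.
    by rewrite -{2}(mul1n X) -mulnDl addn1 prednK // prime_gt0.
  by rewrite natK0 dvdn_mulr.
rewrite En -(natr_mod chK); apply/imsetP.
by exists (Ordinal (ltn_pmod n (prime_gt0 pr))).
Qed.

Lemma EK_bij : bijective EK.
Proof.
have inj : injective EK := additive_inj EK_add EK_ker.
by apply: inj_card_bij inj _; rewrite cardV // cK.
Qed.
End KModel.

Section MulPerm.
Variable K : finFieldType.
Local Open Scope ring_scope.

Lemma ct_mul (z : K) (z0 : z != 0) :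
  perm_eq (cycle_type (perm (mulfI z0)))
          (nseq (#|K|.-1 %/ ordF z)%N (ordF z) ++ [:: 1%N]).
Proof.
set d := ordF z.
have d0 : (0 < d)%N := ordF_gt0 z.
have obf x : ob (perm (mulfI z0)) x = ee z x.
  apply: ob_char; first exact: ee_gt0.
  move=> k; rewrite iter_perm -ee_dvd //.
  have -> : iter k ( *%R z) x = z ^+ k * x.
    by elim: k => [|k IH]; rewrite ?mul1r // iterS IH exprS mulrA.
  by split => [->|/eqP].
apply: ct_perm_eq.
  rewrite mem_cat mem_nseq /= negb_or negb_and eq_sym -lt0n d0 orbT; by [].
move=> n n0; rewrite Nc_sum (eq_bigr (fun x => ((if x == 0 then 1%N else d) == n : nat))); last first.
  by move=> x _; rewrite obf.
rewrite (sumF0 (F := K) (erefl _) (fun b => ((if b then 1%N else d) == n : nat))) /=.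
rewrite count_cat count_nseq /= addn0 mulnDl cnt divnK ?(ordF_dvd (erefl _)) //.
have -> : ((1 == n) * n = (1 == n))%N by case: eqP => [<-|].
by rewrite /pred1 /= addnC mulnC.
Qed.
End MulPerm.
Lemma unit_order (K : finFieldType) d : (0 < #|K|.-1)%N -> (d %| #|K|.-1)%N ->
  exists x : K, x != 0%R /\ ordF x = d.
Proof.
set n := #|K|.-1 => n0 dd.
have d0 : (0 < d)%N by case: d dd => //; rewrite dvd0n => /eqP n00; rewrite n00 in n0.
have /cyclicP [u Hu] := field_unit_group_cyclic [set: {unit K}]%G.
have ou : #[u]%g = n by rewrite orderE -Hu card_finField_unit.
have q0 : (0 < n %/ d)%N by rewrite divn_gt0 // dvdn_leq.
have qd : (n %/ d %| #[u]%g)%N by rewrite ou {2}(esym (divnK dd)) dvdn_mulr.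
exists (val (u ^+ (n %/ d))%g); split.
  by rewrite -unitfE (valP (u ^+ (n %/ d))%g).
rewrite /ordF valKd orderXdiv // ou.
by rewrite {1}(esym (divnK dd)) mulnC mulnK.
Qed.

Lemma Nc_eq_perm (T U : finType) (s : {perm T}) (t : {perm U}) L :
  perm_eq (cycle_type s) L -> perm_eq (cycle_type t) L -> forall m, Nc s m = Nc t m.
Proof. by move=> Hs Ht m; rewrite -(perm_eq_ct Hs) (perm_eq_ct Ht). Qed.

Lemma ob1 (T : finType) (x : T) : ob (1%g : {perm T}) x = 1%N.
Proof.
apply: ob_char => // k; split => // _.
by elim: k => //= k ->; rewrite perm1.
Qed.

Unset Implicit Arguments.

Theorem theorem2p5 (p : nat) (A : finType) (f : {perm A}) :
  prime p -> #|A| = p ^ 2 ->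
  ((exists op : A -> A -> A,
      is_group_op op /\ iso_ZpxZp p op /\ is_auto op f)
   <->
   (f = 1%g \/
    (exists d, 0 < d /\ d %| p ^ 2 - 1 /\
       perm_eq (cycle_type f) (nseq ((p ^ 2 - 1) %/ d) d ++ [:: 1])) \/
    (exists d, 0 < d /\ d %| p - 1 /\
       perm_eq (cycle_type f)
         (nseq ((p - 1) %/ d) (p * d) ++ nseq ((p - 1) %/ d) d ++ [:: 1])) \/
    (exists d1 d2, 0 < d1 /\ 0 < d2 /\ d1 %| p - 1 /\ d2 %| p - 1 /\
       perm_eq (cycle_type f)
         (nseq ((p - 1) ^ 2 %/ lcmn d1 d2) (lcmn d1 d2)
          ++ nseq ((p - 1) %/ d1) d1 ++ nseq ((p - 1) %/ d2) d2 ++ [:: 1])))).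
Proof.
move=> pr cA.
have p1 := prime_gt1 pr.
have natF : forall x : 'F_p, exists n : nat, x = n%:R%R.
  by move=> x; exists (x : nat); rewrite natr_Zp.
have chF := pchar_Fp pr.
have cF := card_Fp pr.
have EWa := EW_add pr.
have EWb := EW_bij pr.
have cW : #|A| = #|{: 'F_p * 'F_p}| by rewrite cA card_prod cF expnS expn1.
rewrite !(subn1 p).
split.
  move=> Hop.
  have [g [ga HN]] := transfer_fwd EWb EWa Hop.
  have := classify pr cF chF natF ga.
  case=> [[d [d0 dd H]] | [[d [d0 dd H]] | [d1 [d2 [d10 d20 dd1 dd2 H]]]]]; right.
  - left; exists d; do 2! split => //; exact: ct_Nc HN H.
  - right; left; exists d; do 2! split => //; exact: ct_Nc HN H.
  - right; right; exists d1, d2; do 4! split => //; exact: ct_Nc HN H.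
have pp : 0 < #|'F_p|.-1 by rewrite cF -subn1 subn_gt0.
have bwdW : forall g : {perm ('F_p * 'F_p)}, additive2 g ->
    (forall m, Nc f m = Nc g m) ->
    exists op : A -> A -> A, is_group_op op /\ iso_ZpxZp p op /\ is_auto op f.
  by move=> g ga HN; exact: (@transfer_bwd p A ('F_p * 'F_p)%type f (fun a b => (a + b)%R) (@EW p) EWb EWa g ga cW HN).
have caseC : forall d1 d2, d1 %| p.-1 -> d2 %| p.-1 ->
    perm_eq (cycle_type f) (Lc p d1 d2) ->
    exists op : A -> A -> A, is_group_op op /\ iso_ZpxZp p op /\ is_auto op f.
  move=> d1 d2 dd1 dd2 H.
  have [l [l0 ol]] := unit_order pp (eq_ind_r (fun x => d1 %| x.-1) dd1 cF).
  have [m [m0 om]] := unit_order pp (eq_ind_r (fun x => d2 %| x.-1) dd2 cF).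
  apply: (bwdW (perm (hd_inj l0 m0))).
    by move=> u v; rewrite !permE; exact: hd_add.
  apply: (Nc_eq_perm H); rewrite -ol -om; exact: ct_hd.
case=> [Ef | [[d [d0 [dd H]]] | [[d [d0 [dd H]]] | [d1 [d2 [d10 [d20 [dd1 [dd2 H]]]]]]]]].
- apply: (caseC 1 1) => //; rewrite Ef.
  apply: ct_perm_eq.
    by rewrite /Lc !mem_cat !mem_nseq /= !negb_or !andbF.
  move=> m m0.
  rewrite Nc_sum (eq_bigr (fun _ => (1 == m : nat))); last by move=> x _; rewrite ob1.
  rewrite sum_nat_const cA /Lc lcmn1 !divn1 !count_cat !count_nseq /= addn0.
  rewrite /pred1 /=; case: eqP => [<-|_]; last by rewrite !muln0.
  have Hp : p = (p.-1).+1 by rewrite prednK // ltnW.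
  move: Hp; set q := p.-1 => Hp; rewrite Hp; nia.
- have [K chK cK] := pPrimePowerField pr (isT : 0 < 2).
  have [th Hth] := exists_theta pr chK cK.
  have ppK : 0 < #|K|.-1 by rewrite cK -subn1 subn_gt0 (ltn_exp2l 0) // (ltnW p1).
  have [z [z0 oz]] := unit_order ppK (eq_ind_r (fun x => d %| x.-1) (eq_ind _ (fun x => d %| x) dd _ (subn1 _)) cK).
  apply: (@transfer_bwd p A K f (fun a b => (a + b)%R) (EK th) (EK_bij pr chK cK Hth) (EK_add pr chK th) (perm (mulfI z0))).
  + by move=> a b; rewrite !permE mulrDr.
  + by rewrite cA cK.
  apply: (Nc_eq_perm H); have := ct_mul z0; rewrite oz cK -subn1; exact.
- have [l [l0 ol]] := unit_order pp (eq_ind_r (fun x => d %| x.-1) dd cF).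
  apply: (bwdW (perm (hj_inj l0))).
    by move=> u v; rewrite !permE; exact: hj_add.
  apply: (Nc_eq_perm H); rewrite -ol; exact: ct_hj.
- exact: (caseC d1 d2).
Qed.
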